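(* Let $\mathcal R$ and $\mathcal S$ be TRSs which are normalization equivalent modulo $\mathcal B$, terminating modulo $\mathcal B$, left-reduced and right-$\mathcal B$-reduced. Then every rule of $\mathcal R$ has a right-$\mathcal B$-equivalent variant in $\mathcal S$ and vice versa.
   Context: Terms over a signature $\mathcal F$; $\to_{\mathcal R}$ is the usual rewrite relation, $\leftarrow$ its inverse. $\mathcal B$ is a fixed ES with $\mathrm{Var}(\ell)=\mathrm{Var}(r)$ for all $\ell\approx r\in\mathcal B$, $\sim_{\mathcal B}=\leftrightarrow^*_{\mathcal B}$, $\to_{\mathcal R/\mathcal B}=\sim_{\mathcal B}\cdot\to_{\mathcal R}\cdot\sim_{\mathcal B}$. Terminating modulo $\mathcal B$: no infinite $\to_{\mathcal R/\mathcal B}$-sequence. Normalization equivalent modulo $\mathcal B$: $\to^!_{\mathcal R}\cdot\sim_{\mathcal B}=\to^!_{\mathcal S}\cdot\sim_{\mathcal B}$, where $a\to^!b$ means $a\to^*b$ with $b$ a normal form. A TRS is left-reduced if for every rule $\ell\to r$, $\ell$ is a normal form of the TRS without that rule; right-$\mathcal B$-reduced if for every rule $\ell\to r$, $r$ is a normal form of $\to_{\mathcal R/\mathcal B}$. Two rules $\ell\to r,\ell'\to r'$ are right-$\mathcal B$-equivalent variants if there is a renaming $\sigma$ with $\ell\sigma=\ell'$ and $r\sigma\sim_{\mathcal B}r'$. *)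

(* Defs.v *)
From Stdlib Require Import List Relations.
Import ListNotations.
Set Implicit Arguments.

Section TRS.
Variable F : Type.
Variable ar : F -> nat.

Inductive term : Type :=
| Var : nat -> term
| Fun : F -> list term -> term.

Inductive wf : term -> Prop :=
| wf_var x : wf (Var x)
| wf_fun f ts : length ts = ar f -> (forall t, In t ts -> wf t) -> wf (Fun f ts).

Inductive occ (x : nat) : term -> Prop :=
| occ_var : occ x (Var x)
| occ_fun f ts t : In t ts -> occ x t -> occ x (Fun f ts).

Fixpoint subst (sigma : nat -> term) (t : term) : term :=
  match t with
  | Var x => sigma x
  | Fun f ts => Fun f (map (subst sigma) ts)
  end.

Definition rules := term -> term -> Prop.

Inductive rstep (R : rules) : term -> term -> Prop :=
| rstep_root l r sigma : R l r -> rstep R (subst sigma l) (subst sigma r)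
| rstep_ctx f ts1 ts2 s t :
    rstep R s t -> rstep R (Fun f (ts1 ++ s :: ts2)) (Fun f (ts1 ++ t :: ts2)).

Definition is_TRS (R : rules) : Prop :=
  forall l r, R l r ->
    wf l /\ wf r /\ (forall x, l <> Var x) /\ (forall x, occ x r -> occ x l).

Definition is_ES_varsym (B : rules) : Prop :=
  forall l r, B l r -> wf l /\ wf r /\ (forall x, occ x l <-> occ x r).

Definition convB (B : rules) : relation term :=
  clos_refl_sym_trans term (rstep B).

Definition rstep_mod (R B : rules) (s t : term) : Prop :=
  exists s' t', convB B s s' /\ rstep R s' t' /\ convB B t' t.

Definition NF (rel : relation term) (t : term) : Prop := forall u, ~ rel t u.

Definition normalizes (R : rules) (s u : term) : Prop :=
  clos_refl_trans term (rstep R) s u /\ NF (rstep R) u.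

Definition terminating_mod (R B : rules) : Prop :=
  ~ exists seq : nat -> term, (forall i, wf (seq i)) /\
      (forall i, rstep_mod R B (seq i) (seq (S i))).

Definition norm_equiv_mod (R S B : rules) : Prop :=
  forall s t, wf s -> wf t ->
    ((exists u, normalizes R s u /\ convB B u t) <->
     (exists u, normalizes S s u /\ convB B u t)).

Definition remove_rule (R : rules) (l r : term) : rules :=
  fun l' r' => R l' r' /\ (l', r') <> (l, r).

Definition left_reduced (R : rules) : Prop :=
  forall l r, R l r -> NF (rstep (remove_rule R l r)) l.

Definition right_B_reduced (R B : rules) : Prop :=
  forall l r, R l r -> NF (rstep_mod R B) r.

Definition renaming (sigma : nat -> term) : Prop :=
  exists pi pinv : nat -> nat,
    (forall x, pinv (pi x) = x) /\ (forall x, pi (pinv x) = x) /\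
    (forall x, sigma x = Var (pi x)).

Definition right_B_equiv_variant (B : rules) (l r l' r' : term) : Prop :=
  exists sigma, renaming sigma /\ subst sigma l = l' /\ convB B (subst sigma r) r'.

End TRS.

(* Main.v *)
Require Import Defs.
From Stdlib Require Import List Relations Lia Arith Classical ClassicalEpsilon.
Import ListNotations.

Section L.
Variable F : Type.
Variable ar : F -> nat.
Notation term := (term F).
Notation V := (Var F).

Lemma term_ind2 (P : term -> Prop) :
  (forall x, P (V x)) ->
  (forall f ts, (forall t, In t ts -> P t) -> P (Fun f ts)) ->
  forall t, P t.
Proof.
  intros HV HF. fix IH 1. intros [x|f ts]. apply HV. apply HF.
  induction ts as [|a ts IHts]. intros t []. intros t [<-|Ht]. apply IH. apply IHts, Ht.
Qed.

Lemma subst_comp (s1 s2 : nat -> term) t :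
  subst s2 (subst s1 t) = subst (fun x => subst s2 (s1 x)) t.
Proof.
  induction t using term_ind2; simpl; auto. f_equal. rewrite map_map.
  apply map_ext_in. auto.
Qed.

Lemma subst_ext (s1 s2 : nat -> term) t :
  (forall x, occ x t -> s1 x = s2 x) -> subst s1 t = subst s2 t.
Proof.
  induction t using term_ind2; simpl; intros Hx.
  apply Hx; constructor. f_equal. apply map_ext_in. intros a Ha. apply H; auto.
  intros x Hxa. apply Hx. econstructor; eauto.
Qed.

Lemma map_eq_in {A B} (f g : A -> B) ts t : map f ts = map g ts -> In t ts -> f t = g t.
Proof.
  induction ts; simpl. intros _ []. intros H [<-|Hin]; inversion H; auto.
Qed.

Lemma subst_eq_occ (s1 s2 : nat -> term) t x :
  subst s1 t = subst s2 t -> occ x t -> s1 x = s2 x.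
Proof.
  intros H Ho. induction Ho; simpl in H. auto.
  inversion H. apply IHHo. eapply map_eq_in; eauto.
Qed.

Lemma subst_var t : subst V t = t.
Proof.
  induction t using term_ind2; simpl; auto. f_equal.
  rewrite <- (map_id ts) at 2. apply map_ext_in; auto.
Qed.

Lemma occ_subst (s : nat -> term) t y :
  occ y (subst s t) -> exists x, occ x t /\ occ y (s x).
Proof.
  induction t using term_ind2; simpl; intros Ho.
  exists x; split; auto; constructor.
  inversion Ho; subst. apply in_map_iff in H2 as [u [<- Hu]].
  destruct (H u Hu H3) as [x [Hx1 Hx2]]. exists x. split; auto. econstructor; eauto.
Qed.

Fixpoint size (t : term) : nat :=
  match t with Var _ _ => 1 | Fun _ ts => S (list_sum (map size ts)) end.

Lemma size_pos t : 1 <= size t.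
Proof. destruct t; simpl; lia. Qed.

Lemma list_sum_le {A} (f g : A -> nat) ts :
  (forall t, In t ts -> f t <= g t) -> list_sum (map f ts) <= list_sum (map g ts).
Proof.
  induction ts; simpl; auto. intros H. pose proof (H a (or_introl eq_refl)).
  assert (list_sum (map f ts) <= list_sum (map g ts)) by (apply IHts; auto). lia.
Qed.

Lemma size_in t ts : In t ts -> size t <= list_sum (map size ts).
Proof.
  induction ts; simpl. intros []. intros [<-|H]. lia. specialize (IHts H). lia.
Qed.

Lemma size_subst s t : size t <= size (subst s t).
Proof.
  induction t using term_ind2; simpl. apply size_pos.
  rewrite map_map. apply le_n_S. apply list_sum_le. auto.
Qed.

Lemma size_ctx f ts1 s ts2 : size s < size (Fun f (ts1 ++ s :: ts2)).
Proof.
  simpl. assert (In s (ts1 ++ s :: ts2)) by (apply in_or_app; simpl; auto).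
  apply size_in in H. lia.
Qed.

Lemma rstep_mono_size (R R' : rules F) s t :
  rstep R s t -> (forall l r, R l r -> size l <= size s -> R' l r) -> rstep R' s t.
Proof.
  induction 1; intros H'.
  apply rstep_root. apply H'; auto. apply size_subst.
  apply rstep_ctx. apply IHrstep. intros l r Hr Hs. apply H'; auto.
  pose proof (size_ctx f ts1 s ts2). lia.
Qed.

Lemma rstep_subst (R : rules F) th s t :
  rstep R s t -> rstep R (subst th s) (subst th t).
Proof.
  induction 1; simpl.
  rewrite !subst_comp. apply rstep_root; auto.
  rewrite !map_app. simpl. apply rstep_ctx; auto.
Qed.

Lemma convB_subst (B : rules F) th s t :
  convB B s t -> convB B (subst th s) (subst th t).
Proof.
  unfold convB. induction 1.
  apply rst_step, rstep_subst; auto. apply rst_refl. apply rst_sym; auto.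
  eapply rst_trans; eauto.
Qed.

Lemma rstep_flip (R : rules F) s t : rstep R s t -> rstep (fun l r => R r l) t s.
Proof.
  induction 1. apply rstep_root with (R := fun l r => R r l); auto. apply rstep_ctx; auto.
Qed.

Lemma wf_subst_inv s t x : wf ar (subst s t) -> occ x t -> wf ar (s x).
Proof.
  intros Hw Ho. induction Ho; simpl in Hw; auto.
  inversion Hw; subst. apply IHHo. apply H3. apply in_map; auto.
Qed.

Lemma wf_subst s t : wf ar t -> (forall x, occ x t -> wf ar (s x)) -> wf ar (subst s t).
Proof.
  induction 1; simpl; intros Hx. apply Hx; constructor.
  constructor. rewrite length_map; auto.
  intros u Hu. apply in_map_iff in Hu as [v [<- Hv]]. apply H1; auto.
  intros y Hy. apply Hx. econstructor; eauto.
Qed.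

Lemma rstep_wf (R : rules F) s t :
  (forall l r, R l r -> wf ar r /\ (forall x, occ x r -> occ x l)) ->
  rstep R s t -> wf ar s -> wf ar t.
Proof.
  intros HR. induction 1; intros Hw.
  destruct (HR _ _ H) as [Hr Hv]. apply wf_subst; auto.
  intros x Hx. eapply wf_subst_inv; eauto.
  inversion Hw as [|? ? Hlen Hall]; subst. constructor.
  rewrite length_app in *; simpl in *; auto.
  intros u Hu. apply in_app_or in Hu as [Hu|[<-|Hu]].
  apply Hall; apply in_or_app; auto. apply IHrstep. apply Hall; apply in_or_app; simpl; auto.
  apply Hall; apply in_or_app; simpl; auto.
Qed.

Lemma convB_wf (B : rules F) s t :
  is_ES_varsym ar B -> convB B s t -> (wf ar s <-> wf ar t).
Proof.
  intros HB. unfold convB. induction 1; try tauto.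
  split; intros.
  eapply rstep_wf; eauto. intros l r Hlr. destruct (HB _ _ Hlr) as [? [? ?]]. split; auto.
  intros; apply H3; auto.
  eapply rstep_wf. 2: apply rstep_flip; eauto. 2: auto.
  intros l r Hlr. destruct (HB _ _ Hlr) as [? [? ?]]. split; auto.
  intros; apply H3; auto.
Qed.

Lemma rstep_TRS_wf (R : rules F) s t : is_TRS ar R -> rstep R s t -> wf ar s -> wf ar t.
Proof.
  intros HR. apply rstep_wf. intros l r H. destruct (HR _ _ H) as [? [? [? ?]]]. auto.
Qed.

Lemma rstep_mod_wf (R B : rules F) s t :
  is_ES_varsym ar B -> is_TRS ar R -> rstep_mod R B s t -> wf ar s -> wf ar t.
Proof.
  intros HB HR [s' [t' [H1 [H2 H3]]]] Hw.
  apply (convB_wf _ _ _ HB H3). eapply rstep_TRS_wf; eauto. apply (convB_wf _ _ _ HB H1). auto.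
Qed.

Lemma rt_NF (R : rules F) x u : clos_refl_trans term (rstep R) x u -> NF (rstep R) x -> u = x.
Proof.
  intros H HN. apply clos_rt_rt1n in H. inversion H; auto. exfalso; eapply HN; eauto.
Qed.

End L.

Lemma cycle_seq {T} (rel : relation T) (P : T -> Prop) x :
  (forall a b, P a -> rel a b -> P b) -> P x -> clos_trans _ rel x x ->
  exists seq : nat -> T, (forall i, P (seq i)) /\ forall i, rel (seq i) (seq (S i)).
Proof.
  intros HP Px Hxx.
  set (Q := fun a => clos_trans _ rel x a /\ clos_trans _ rel a x).
  assert (Hn : forall a, exists b, Q a -> rel a b /\ Q b).
  { intros a. destruct (classic (Q a)) as [Hq|Hq]; [|exists a; tauto].
    destruct Hq as [Hxa Hax]. apply clos_trans_t1n in Hax.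
    inversion Hax; subst.
    - exists x. intros _. split; auto. split; auto.
    - exists y. intros _. split; auto. split.
      eapply t_trans; eauto. apply t_step; auto. apply clos_t1n_trans; auto. }
  set (g := fun a => proj1_sig (constructive_indefinite_description _ (Hn a))).
  assert (Hg : forall a, Q a -> rel a (g a) /\ Q (g a)).
  { intros a. unfold g. destruct (constructive_indefinite_description _ (Hn a)); simpl; auto. }
  exists (fun i => Nat.iter i g x).
  assert (HQ : forall i, Q (Nat.iter i g x)).
  { induction i; simpl. split; auto. apply Hg; auto. }
  assert (HR : forall i, rel (Nat.iter i g x) (Nat.iter (S i) g x)).
  { intros i. simpl. apply Hg; auto. }
  split; auto. induction i; simpl; auto. eapply HP. apply IHi. apply HR.
Qed.

Definition swap (u v z : nat) : nat :=
  if Nat.eqb z u then v else if Nat.eqb z v then u else z.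

Lemma swap_inv u v z : swap u v (swap u v z) = z.
Proof.
  unfold swap. destruct (Nat.eqb_spec z u).
  - subst. destruct (Nat.eqb_spec v u); subst; auto. rewrite Nat.eqb_refl. auto.
  - destruct (Nat.eqb_spec z v).
    + subst. rewrite Nat.eqb_refl. auto.
    + destruct (Nat.eqb_spec z u); [lia|]. destruct (Nat.eqb_spec z v); lia.
Qed.

Lemma swap_other u v z : z <> u -> z <> v -> swap u v z = z.
Proof.
  unfold swap. intros. destruct (Nat.eqb_spec z u); [lia|]. destruct (Nat.eqb_spec z v); lia.
Qed.

Lemma swap_u u v : swap u v u = v.
Proof. unfold swap. rewrite Nat.eqb_refl. auto. Qed.

Lemma extend_perm (xs : list nat) (f : nat -> nat) :
  (forall a b, In a xs -> In b xs -> f a = f b -> a = b) ->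
  exists pi pinv : nat -> nat,
    (forall x, pinv (pi x) = x) /\ (forall x, pi (pinv x) = x) /\
    (forall x, In x xs -> pi x = f x).
Proof.
  induction xs as [|a xs IH]; intros Hinj.
  - exists (fun x => x), (fun x => x). simpl; tauto.
  - destruct IH as [pi [pinv [H1 [H2 H3]]]].
    { intros; apply Hinj; simpl; auto. }
    destruct (in_dec Nat.eq_dec a xs) as [Ha|Ha].
    + exists pi, pinv. split; auto. split; auto. intros x [<-|Hx]; auto.
    + exists (fun x => swap (pi a) (f a) (pi x)), (fun x => pinv (swap (pi a) (f a) x)).
      split. intros x. rewrite swap_inv. auto.
      split. intros x. rewrite H2. apply swap_inv.
      intros x [<-|Hx]. apply swap_u.
      rewrite (H3 x Hx). apply swap_other.
      intros E. rewrite <- (H3 x Hx) in E. assert (x = a) by (rewrite <- (H1 x), <- (H1 a); congruence).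
      subst; contradiction.
      intros E. assert (x = a) by (apply Hinj; simpl; auto). subst; contradiction.
Qed.

Section M.
Variable F : Type.
Variable ar : F -> nat.
Notation term := (term F).
Notation V := (Var F).

Fixpoint vars (t : term) : list nat :=
  match t with Var _ x => [x] | Fun _ ts => flat_map vars ts end.

Lemma occ_vars x t : occ x t <-> In x (vars t).
Proof.
  induction t using term_ind2; simpl.
  split. intros H; inversion H; auto. intros [<-|[]]; constructor.
  rewrite in_flat_map. split.
  intros Ho; inversion Ho; subst. exists t. split; auto. apply H; auto.
  intros [t [Ht Hx]]. econstructor; eauto. apply H; auto.
Qed.

Lemma mod_of_step (S B : rules F) a b : rstep S a b -> rstep_mod S B a b.
Proof. intros H. exists a, b. split. apply rst_refl. split; auto. apply rst_refl. Qed.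

Lemma rt1n_mod (S B : rules F) a b :
  clos_refl_trans_1n term (rstep S) a b -> clos_refl_trans term (rstep_mod S B) a b.
Proof.
  induction 1. apply rt_refl. eapply rt_trans; eauto. apply rt_step, mod_of_step; auto.
Qed.

Lemma no_NF_red (B R S : rules F) :
  is_ES_varsym ar B -> is_TRS ar S -> norm_equiv_mod ar R S B -> terminating_mod ar S B ->
  forall x w, wf ar x -> NF (rstep R) x -> rstep S x w -> False.
Proof.
  intros HB HS Hne Hter x w Hx HN Hxw.
  destruct (proj1 (Hne x x Hx Hx)) as [u [[Hxu HNu] Hux]].
  { exists x. split. split; auto. apply rt_refl. apply rst_refl. }
  apply clos_rt_rt1n in Hxu. inversion Hxu as [|x1 ? Hx1 Hx1u]; subst.
  - eapply HNu; eauto.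
  - assert (Hc : clos_trans term (rstep_mod S B) x1 x1).
    { eapply clos_rt_t. apply rt1n_mod; eauto. apply t_step.
      exists x, x1. split; auto. split; auto. apply rst_refl. }
    destruct (@cycle_seq term (rstep_mod S B) (wf ar) x1) as [sq [H1 H2]]; auto.
    intros a b Ha Hab. eapply rstep_mod_wf; eauto.
    eapply rstep_TRS_wf; eauto.
    apply Hter. exists sq. auto.
Qed.

Lemma proper_NF (R : rules F) l r f ts1 s ts2 :
  left_reduced R -> R l r -> l = Fun f (ts1 ++ s :: ts2) -> NF (rstep R) s.
Proof.
  intros HL Hlr El u Hsu. apply (HL l r Hlr (Fun f (ts1 ++ u :: ts2))). subst l.
  apply rstep_ctx. apply rstep_mono_size with R; auto. intros l0 r0 H0 Hs. split; auto.
  intros E. injection E. intros _ E'. subst l0. pose proof (size_ctx _ f ts1 s ts2). lia.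
Qed.

Lemma root_only (B R S : rules F) l r :
  is_ES_varsym ar B -> is_TRS ar S -> norm_equiv_mod ar R S B -> terminating_mod ar S B ->
  left_reduced R -> R l r -> wf ar l -> forall w, rstep S l w ->
  exists l1 r1 sg, S l1 r1 /\ l = subst sg l1 /\ w = subst sg r1.
Proof.
  intros HB HS Hne Hter HL Hlr Hwl w Hw.
  revert Hwl. assert (Hg : forall a, a = l -> rstep S a w -> wf ar l ->
     exists l1 r1 sg, S l1 r1 /\ l = subst sg l1 /\ w = subst sg r1).
  2: now apply (Hg l eq_refl Hw).
  intros a Ea Haw. destruct Haw as [l1 r1 sg H1|f ts1 ts2 s t Hst]; intros Hwl.
  - exists l1, r1, sg. auto.
  - exfalso. assert (NF (rstep R) s) by (eapply proper_NF; eauto).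
    assert (wf ar s).
    { subst l. inversion Hwl as [|? ? _ Hall]. apply Hall. apply in_or_app; simpl; auto. }
    eapply no_NF_red; eauto.
Qed.

Lemma var_of_subst (sg : nat -> term) t x : subst sg t = V x -> exists y, t = V y /\ sg y = V x.
Proof. destruct t; simpl; intros H. eauto. discriminate. Qed.

Lemma key (B R S : rules F) :
  is_ES_varsym ar B -> is_TRS ar R -> is_TRS ar S ->
  norm_equiv_mod ar R S B -> norm_equiv_mod ar S R B ->
  terminating_mod ar R B -> terminating_mod ar S B ->
  left_reduced R -> left_reduced S ->
  right_B_reduced R B -> right_B_reduced S B ->
  forall l r, R l r -> exists l' r', S l' r' /\ right_B_equiv_variant B l r l' r'.
Proof.
  intros HB HR HS HRS HSR HtR HtS HLR HLS HrR HrS l r Hlr.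
  destruct (HR l r Hlr) as [Hwl [Hwr [_ Hvr]]].
  assert (HNr : NF (rstep R) r) by (intros u Hu; eapply HrR; eauto; apply mod_of_step; eauto).
  assert (Hst : rstep R l r).
  { assert (Hs : rstep R (subst V l) (subst V r)) by (constructor; auto).
    rewrite !subst_var in Hs. auto. }
  assert (Hnorm : normalizes R l r) by (split; auto; apply rt_step; auto).
  destruct (proj1 (HRS l r Hwl Hwr)) as [u [[Hlu HNu] Hur]].
  { exists r. split; auto. apply rst_refl. }
  assert (Hred : exists w, rstep S l w).
  { apply NNPP. intros Hno. assert (HN : NF (rstep S) l) by (intros w Hw; apply Hno; eauto).
    pose proof (rt_NF _ _ _ _ Hlu HN) as ->.
    apply HtR. exists (fun _ => l). split; auto. intros _.
    exists l, r. split. apply rst_refl. split; auto. apply rst_sym. auto. }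
  destruct Hred as [w Hw].
  destruct (root_only _ _ _ _ _ HB HS HRS HtS HLR Hlr Hwl _ Hw) as [l' [r' [sg [Hs' [El Ew]]]]].
  destruct (HS l' r' Hs') as [Hwl' [Hwr' [_ Hvr']]].
  assert (Hred' : exists w, rstep R l' w).
  { apply NNPP. intros Hno. assert (HN : NF (rstep R) l') by (intros w' Hw'; apply Hno; eauto).
    apply (no_NF_red _ _ _ HB HS HRS HtS l' r' Hwl' HN).
    assert (Hs : rstep S (subst V l') (subst V r')) by (constructor; auto).
    rewrite !subst_var in Hs. auto. }
  destruct Hred' as [w' Hw'].
  destruct (root_only _ _ _ _ _ HB HR HSR HtR HLS Hs' Hwl' _ Hw') as [l0 [r0 [tau [H0 [El' _]]]]].
  assert (E0 : (l0, r0) = (l, r)).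
  { apply NNPP. intros Hne. apply (HLR l r Hlr (subst (fun x => subst sg (tau x)) r0)).
    assert (Hl : l = subst (fun x => subst sg (tau x)) l0) by (rewrite <- subst_comp; congruence).
    assert (Hx : rstep (remove_rule R l r) (subst (fun x => subst sg (tau x)) l0)
      (subst (fun x => subst sg (tau x)) r0)) by (apply rstep_root; split; auto).
    rewrite <- Hl in Hx. exact Hx. }
  injection E0 as -> ->.
  assert (Hid : forall x, occ x l -> subst sg (tau x) = V x).
  { intros x Hx. change ((fun y => subst sg (tau y)) x = V x). apply (subst_eq_occ _ _ _ l); auto.
    rewrite <- subst_comp, <- El', <- El. symmetry. apply subst_var. }
  set (pi0 := fun x => match tau x with Var _ y => y | _ => 0 end).
  assert (Htau : forall x, occ x l -> tau x = V (pi0 x) /\ sg (pi0 x) = V x).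
  { intros x Hx. destruct (var_of_subst _ _ _ (Hid x Hx)) as [y [Ey Hy]].
    unfold pi0. rewrite Ey. auto. }
  destruct (extend_perm (vars l) pi0) as [pi [pinv [Hp1 [Hp2 Hp3]]]].
  { intros a b Ha Hb Eab. apply occ_vars in Ha, Hb.
    destruct (Htau a Ha) as [_ Ha']. destruct (Htau b Hb) as [_ Hb'].
    rewrite Eab in Ha'. rewrite Ha' in Hb'. congruence. }
  set (rho := fun x => V (pi x)).
  assert (Hrho : forall x, occ x l -> rho x = tau x).
  { intros x Hx. unfold rho. rewrite Hp3 by (apply occ_vars; auto).
    destruct (Htau x Hx); auto. }
  assert (Hrl : subst rho l = l') by (rewrite El'; apply subst_ext; auto).
  assert (Hrr : subst rho r = subst tau r) by (apply subst_ext; auto).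
  assert (Hback : forall y, occ y l' -> subst tau (sg y) = V y).
  { intros y Hy. rewrite El' in Hy. destruct (occ_subst _ _ _ _ Hy) as [x [Hx Hyx]].
    destruct (Htau x Hx) as [E1 E2]. rewrite E1 in Hyx. inversion Hyx; subst.
    rewrite E2. simpl. auto. }
  assert (Hr'back : subst tau (subst sg r') = r').
  { rewrite subst_comp. rewrite <- (subst_var _ r') at 2. apply subst_ext. auto. }
  assert (HNr' : NF (rstep S) r') by (intros v Hv; eapply HrS; eauto; apply mod_of_step; eauto).
  assert (Hw1 : forall w1, rstep S l w1 -> w1 = subst sg r').
  { intros w1 Hw1.
    destruct (root_only _ _ _ _ _ HB HS HRS HtS HLR Hlr Hwl _ Hw1) as [l1 [r1 [sg1 [H1 [El1 Ew1]]]]].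
    assert (E1 : (l1, r1) = (l', r')).
    { apply NNPP. intros Hne. apply (HLS l' r' Hs' (subst (fun x => subst tau (sg1 x)) r1)).
      assert (Hl : l' = subst (fun x => subst tau (sg1 x)) l1) by (rewrite <- subst_comp; congruence).
      assert (Hx : rstep (remove_rule S l' r') (subst (fun x => subst tau (sg1 x)) l1)
        (subst (fun x => subst tau (sg1 x)) r1)) by (apply rstep_root; split; auto).
      rewrite <- Hl in Hx. exact Hx. }
    injection E1 as -> ->. subst w1. apply subst_ext. intros x Hx.
    apply (subst_eq_occ _ _ _ l'); auto. congruence. }
  apply clos_rt_rt1n in Hlu. inversion Hlu as [Eu|w1 ? Hw1s Hw1u]; subst.
  { exfalso. eapply HNu; eauto. }
  rewrite (Hw1 w1 Hw1s) in Hw1u. inversion Hw1u as [Eu|w2 ? Hw2 _]; subst.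
  - exists l', r'. split; auto. exists rho. split.
    exists pi, pinv. auto. split; auto. rewrite Hrr.
    apply rst_sym. rewrite <- Hr'back at 1. apply convB_subst. auto.
  - exfalso. apply (HNr' (subst tau w2)). rewrite <- Hr'back. apply rstep_subst. auto.
Qed.

End M.

Theorem lemma6p17 (F : Type) (ar : F -> nat) (B R S : rules F) :
  is_ES_varsym ar B ->
  is_TRS ar R -> is_TRS ar S ->
  norm_equiv_mod ar R S B ->
  terminating_mod ar R B -> terminating_mod ar S B ->
  left_reduced R -> left_reduced S ->
  right_B_reduced R B -> right_B_reduced S B ->
  (forall l r, R l r -> exists l' r', S l' r' /\ right_B_equiv_variant B l r l' r') /\
  (forall l r, S l r -> exists l' r', R l' r' /\ right_B_equiv_variant B l r l' r').
Proof.
  intros HB HR HS Hne HtR HtS HLR HLS HrR HrS.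
  assert (Hne' : norm_equiv_mod ar S R B).
  { intros s t Hs Ht. specialize (Hne s t Hs Ht). tauto. }
  split; eapply key; eauto.
Qed.
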